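(* For every integer $t\ge 2$ there exists a regular simple graph $\Gamma$ on $2t$ vertices such that $E(\Gamma)=E(\bar\Gamma)$ and $\Gamma$ and $\bar\Gamma$ are not isospectral.
   Context: The energy $E(\Gamma)$ is the sum of the absolute values of the adjacency eigenvalues (with multiplicity); $\bar\Gamma$ is the complement of $\Gamma$; two graphs are isospectral if their adjacency spectra (with multiplicities) coincide. *)

(* Defs.v *)
(* eigenvalues computed in algC (algebraically closed). *)
From mathcomp Require Import all_boot all_order all_algebra all_field.
Set Implicit Arguments. Unset Strict Implicit. Unset Printing Implicit Defensive.
Import Order.TTheory GRing.Theory Num.Theory.
Local Open Scope ring_scope.

Definition simple_graph n (e : rel 'I_n) : Prop :=
  (forall u v, e u v = e v u) /\ (forall u, ~~ e u u).

Definition regular n (e : rel 'I_n) : Prop :=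
  exists k : nat, forall v : 'I_n, #|[set w | e v w]| = k.

Definition compl_graph n (e : rel 'I_n) : rel 'I_n :=
  fun u v => (u != v) && ~~ e u v.

Definition adj n (e : rel 'I_n) : 'M[algC]_n := \matrix_(i, j) (e i j)%:R.

Lemma char_poly_split n (A : 'M[algC]_n) :
  exists s : seq algC, char_poly A == \prod_(z <- s) ('X - z%:P).
Proof.
have [s Hs] := closed_field_poly_normal (char_poly A).
by exists s; rewrite {1}Hs (monicP (char_poly_monic A)) scale1r.
Qed.

(* Eigenvalues with multiplicity (roots of the characteristic polynomial). *)
Definition spectrum n (A : 'M[algC]_n) : seq algC := xchoose (char_poly_split A).

Lemma spectrumE n (A : 'M[algC]_n) :
  char_poly A = \prod_(z <- spectrum A) ('X - z%:P).
Proof. exact/eqP/(xchooseP (char_poly_split A)). Qed.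

Definition energy n (e : rel 'I_n) : algC := \sum_(z <- spectrum (adj e)) `|z|.

Definition isospectral n (e f : rel 'I_n) : Prop :=
  perm_eq (spectrum (adj e)) (spectrum (adj f)).

(* Main.v *)
Require Import Defs.
From mathcomp Require Import all_boot all_order all_algebra all_field.
From mathcomp Require Import ring lra.
Set Implicit Arguments. Unset Strict Implicit. Unset Printing Implicit Defensive.
Import Order.TTheory GRing.Theory Num.Theory.
Local Open Scope ring_scope.

Lemma det_blockPQ (R : comNzRingType) n (A B : 'M[R]_n) :
  \det (block_mx A B B A) = \det (A + B) * \det (A - B).
Proof.
have E: block_mx 1%:M 1%:M 0 1%:M *m block_mx A B B A *m block_mx 1%:M (-1%:M) 0 1%:M
   = block_mx (A+B) 0 B (A-B).
  rewrite !mulmx_block !(mul1mx, mulmx1, mul0mx, mulmx0, add0r, addr0, mulmxN, mulNmx).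
  by congr block_mx; rewrite ?[B + A]addrC ?addNr // addrC.
have := congr1 determinant E.
by rewrite !det_mulmx det_ublock det_ublock det_lblock !det1 !mul1r mulr1 => <-.
Qed.

Lemma const_mul (R : comNzRingType) m k p (a b : R) :
  (const_mx a : 'M_(m, k)) *m (const_mx b : 'M_(k, p)) = const_mx (a * b *+ k).
Proof.
by apply/matrixP => i j; rewrite !mxE (eq_bigr (fun _ => a * b)) ?sumr_const ?card_ord // => l _; rewrite !mxE.
Qed.

Lemma det_cJ (R : comNzRingType) n (c d : R) :
  \det (c%:M + const_mx d : 'M[R]_(1 + n)) = (c + n.+1%:R * d) * c ^+ n.
Proof.
have EM : (c%:M + const_mx d : 'M[R]_(1 + n)) =
   block_mx (c + d)%:M (const_mx d) (const_mx d) (c%:M + const_mx d).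
  apply/matrixP => i j; rewrite -[i]splitK -[j]splitK.
  case: (split i) => a; case: (split j) => b /=;
  rewrite ?block_mxEul ?block_mxEur ?block_mxEdl ?block_mxEdr !mxE
    ?eq_lshift ?eq_rshift ?eq_lrshift ?eq_rlshift ?ord1 ?eqxx ?mulr1n ?mulr0n ?add0r //.
have E: block_mx 1%:M 0 (const_mx (-1)) 1%:M *m block_mx (c + d)%:M (const_mx d) (const_mx d) (c%:M + const_mx d : 'M_n) *m block_mx 1%:M 0 (const_mx 1) 1%:M
   = block_mx ((c + n.+1%:R * d)%:M : 'M_1) (const_mx d) 0 c%:M.
  rewrite !mulmx_block !(mul1mx, mulmx1, mul0mx, mulmx0, add0r, addr0, mulmxN, mulNmx).
  rewrite ?mul_mx_scalar ?mul_scalar_mx ?scalemx_const ?const_mul.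
  rewrite !mulmxDl ?mul_mx_scalar ?mul_scalar_mx ?scalemx_const ?const_mul.
  congr block_mx; apply/matrixP => i j; rewrite !mxE ?ord1 ?eqxx ?mulr1n ?mulr0n; ring.

rewrite (congr1 determinant EM); have := congr1 determinant E.
rewrite !det_mulmx det_ublock !det_lblock !det1 !mul1r mulr1 !det_scalar expr1 => ->.
done.
Qed.

Lemma split_lshift m n (a : 'I_m) : split (lshift n a) = inl a.
Proof. exact: (unsplitK (inl a)). Qed.
Lemma split_rshift m n (a : 'I_n) : split (rshift m a) = inr a.
Proof. exact: (unsplitK (inr a)). Qed.

Lemma char_poly_block n (P Q : 'M[algC]_n) :
  char_poly (block_mx P Q Q P) = char_poly (P + Q) * char_poly (P - Q).
Proof.
have EM : char_poly_mx (block_mx P Q Q P) =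
  block_mx (char_poly_mx P) (- map_mx polyC Q) (- map_mx polyC Q) (char_poly_mx P).
  apply/matrixP => i j; rewrite -[i]splitK -[j]splitK.
  case: (split i) => a; case: (split j) => b /=;
  rewrite ?block_mxEul ?block_mxEur ?block_mxEdl ?block_mxEdr !mxE
    ?eq_lshift ?eq_rshift ?eq_lrshift ?eq_rlshift ?split_lshift ?split_rshift /= ?mxE ?split_lshift ?split_rshift //=.
  1-2: by rewrite mulr0n sub0r.
rewrite /char_poly EM det_blockPQ.
congr (_ * _); congr (\det _);
  apply/matrixP => i j; rewrite !mxE ?polyCD ?polyCN ?polyCB; ring.
Qed.

Lemma prod_nseq (x b : algC) n :
  ('X - x%:P) * ('X - b%:P) ^+ n = \prod_(z <- x :: nseq n b) ('X - z%:P).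
Proof.
rewrite big_cons; congr (_ * _); elim: n => [|n IH]; first by rewrite big_nil expr0.
by rewrite /= big_cons exprS IH.
Qed.

Lemma char_poly_cJ n (a b : algC) :
  char_poly (const_mx a + b%:M : 'M_(1 + n)) =
  \prod_(z <- (b + n.+1%:R * a) :: nseq n b) ('X - z%:P).
Proof.
rewrite -prod_nseq.
have EM : char_poly_mx (const_mx a + b%:M : 'M_(1 + n)) =
  ('X - b%:P)%:M + const_mx (- a%:P).
  apply/matrixP => i j; rewrite !mxE polyCD polyCMn; case: (i == j); rewrite ?mulr1n ?mulr0n; ring.
rewrite /char_poly (congr1 determinant EM) det_cJ.
congr (_ * _); rewrite polyCD polyCM polyC_natr; ring.
Qed.
Definition ge n (u v : 'I_(n + n)) : bool :=
  match split u, split v with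
  | inl i, inr j => i != j
  | inr i, inl j => i != j
  | _, _ => false end.

Lemma ge_ll n (a b : 'I_n) : ge (lshift n a) (lshift n b) = false.
Proof. by rewrite /ge !split_lshift. Qed.
Lemma ge_rr n (a b : 'I_n) : ge (rshift n a) (rshift n b) = false.
Proof. by rewrite /ge !split_rshift. Qed.
Lemma ge_lr n (a b : 'I_n) : ge (lshift n a) (rshift n b) = (a != b).
Proof. by rewrite /ge split_lshift split_rshift. Qed.
Lemma ge_rl n (a b : 'I_n) : ge (rshift n a) (lshift n b) = (a != b).
Proof. by rewrite /ge split_lshift split_rshift. Qed.

Definition geE := (ge_ll, ge_rr, ge_lr, ge_rl).

Lemma ge_simple n : simple_graph (@ge n).
Proof.
split.
  move=> u v; rewrite -[u]splitK -[v]splitK.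
  by case: (split u) => a; case: (split v) => b /=; rewrite !geE // eq_sym.
by move=> u; rewrite -[u]splitK; case: (split u) => a /=; rewrite !geE.
Qed.

Lemma ge_regular n : regular (@ge n).
Proof.
exists n.-1 => v; rewrite -[v]splitK; case: (split v) => a /=.
  have -> : [set w | ge (lshift n a) w] = @rshift n n @: [set~ a].
    apply/setP => w; rewrite -[w]splitK; case: (split w) => b /=; rewrite inE geE.
      apply/esym/negbTE/imsetP => -[c _ /eqP]; by rewrite eq_lrshift.
    by rewrite mem_imset ?inE 1?eq_sym //; exact: rshift_inj.
  by rewrite card_imset ?cardsC1 ?card_ord //; exact: rshift_inj.
have -> : [set w | ge (rshift n a) w] = lshift n @: [set~ a].
  apply/setP => w; rewrite -[w]splitK; case: (split w) => b /=; rewrite inE geE.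
    by rewrite mem_imset ?inE 1?eq_sym //; exact: lshift_inj.
  apply/esym/negbTE/imsetP => -[c _ /eqP]; by rewrite eq_rlshift.
by rewrite card_imset ?cardsC1 ?card_ord //; exact: lshift_inj.
Qed.

Definition J1 n : 'M[algC]_n := const_mx 1 + (-1)%:M.

Lemma adj_ge n : adj (@ge n) = block_mx 0 (J1 n) (J1 n) 0.
Proof.
apply/matrixP => i j; rewrite -[i]splitK -[j]splitK.
case: (split i) => a; case: (split j) => b /=;
rewrite ?block_mxEul ?block_mxEur ?block_mxEdl ?block_mxEdr !mxE geE //.
all: by case: (a == b); rewrite /= ?mulr1n ?mulr0n ?subrr ?addr0.
Qed.

Lemma adj_cge n : adj (compl_graph (@ge n)) = block_mx (J1 n) 1%:M 1%:M (J1 n).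
Proof.
apply/matrixP => i j; rewrite -[i]splitK -[j]splitK.
case: (split i) => a; case: (split j) => b /=;
rewrite ?block_mxEul ?block_mxEur ?block_mxEdl ?block_mxEdr !mxE /compl_graph geE
  ?eq_lshift ?eq_rshift ?eq_lrshift ?eq_rlshift /=.
all: by case: (a == b); rewrite /= ?mulr1n ?mulr0n ?subrr ?addr0.
Qed.
Lemma spec_perm n (A : 'M[algC]_n) s :
  char_poly A = \prod_(z <- s) ('X - z%:P) -> perm_eq (spectrum A) s.
Proof. by move=> h; apply: prod_XsubC_eq; rewrite -spectrumE. Qed.

Lemma sum_nseq k (c : algC) (F : algC -> algC) :
  \sum_(z <- nseq k c) F z = F c *+ k.
Proof. by elim: k => [|k IH]; rewrite ?big_nil ?mulr0n //= big_cons IH mulrS. Qed.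

Theorem mainTheorem5 (t : nat) (ht : (2 <= t)%N) :
  exists e : rel 'I_(2 * t),
    [/\ simple_graph e, regular e,
        energy e = energy (compl_graph e)
      & ~ isospectral e (compl_graph e)].
Proof.
case: t ht => [|[|n]] // _.
rewrite (_ : (2 * n.+2 = n.+2 + n.+2)%N); last by rewrite mul2n addnn.
exists (@ge n.+2).
have S1 : perm_eq (spectrum (adj (@ge n.+2)))
   ((n.+1%:R :: nseq n.+1 (-1)) ++ (- n.+1%:R :: nseq n.+1 1)).
  apply: spec_perm; rewrite adj_ge char_poly_block add0r sub0r big_cat.
  have -> : - J1 n.+2 = const_mx (-1) + 1%:M.
    by apply/matrixP => i j; rewrite !mxE; ring.
  rewrite /J1 !(@char_poly_cJ n.+1).
  by congr (_ * _); rewrite !big_cons; congr (_ * _); congr ('X - _%:P); ring.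
have S2 : perm_eq (spectrum (adj (compl_graph (@ge n.+2))))
   ((n.+2%:R :: nseq n.+1 0) ++ (n%:R :: nseq n.+1 (-2))).
  apply: spec_perm; rewrite adj_cge char_poly_block big_cat.
  have -> : J1 n.+2 + 1%:M = const_mx 1 + 0%:M.
    by apply/matrixP => i j; rewrite !mxE; ring.
  have -> : J1 n.+2 - 1%:M = const_mx 1 + (-2)%:M.
    by apply/matrixP => i j; rewrite !mxE; ring.
  rewrite !(@char_poly_cJ n.+1).
  by congr (_ * _); rewrite !big_cons; congr (_ * _); congr ('X - _%:P); ring.
split.
- exact: ge_simple.
- exact: ge_regular.
- rewrite /energy (perm_big _ S1) (perm_big _ S2) !big_cat !big_cons !sum_nseq /=.
  rewrite !normrN !normr_nat normr1 normr0.
  ring.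
- rewrite /isospectral (permPl S1) (permPr S2) => H'.
  have := perm_mem H' (n.+2%:R).
  rewrite !(inE, mem_cat, mem_nseq) eqxx /=.
  have h1 : (n.+2%:R == n.+1%:R :> algC) = false by rewrite eqr_nat gtn_eqF.
  have h2 : (n.+2%:R == -1 :> algC) = false.
    by rewrite -addr_eq0 -(natrD _ n.+2 1) pnatr_eq0.
  have h3 : (n.+2%:R == - n.+1%:R :> algC) = false.
    by rewrite -addr_eq0 -natrD pnatr_eq0.
  have h4 : (n.+2%:R == 1 :> algC) = false by have := eqr_nat algC n.+2 1.
  by rewrite h1 h2 h3 h4 !andbF.
Qed.
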